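(* Let $f:X\to Y$ be an equivariant map of nominal sets, $u\in X$ an $f$-safe element and $x\in\mathcal V$ with $x\notin\mathsf{bv}_f(u)$. Then $(x,u)$ is $(\theta_Y\circ(\mathcal V\times f))$-safe, where $\theta_Y\circ(\mathcal V\times f):\mathcal V\times X\to[\mathcal V]Y$, $(y,w)\mapsto\langle y\rangle f(w)$.
   Context: Nominal sets over a countably infinite set $\mathcal V$ of names; $\mathsf{supp}$ least finite support. $[\mathcal V]Y$ is the quotient of $\mathcal V\times Y$ by $(x_1,u_1)\sim(x_2,u_2)$ iff $(x_1\ z)\cdot u_1=(x_2\ z)\cdot u_2$ for some $z$ fresh for all four, classes $\langle x\rangle u$; $\theta_Y(x,u)=\langle x\rangle u$. For equivariant $f$: $u$ is $f$-safe if $|\mathsf{supp}(u)|=\max\{|\mathsf{supp}(v)|:v\in f^{-1}(f(u))\}$ (maximum existing); $\mathsf{bv}_f(u)=\mathsf{supp}(u)\setminus\mathsf{supp}(f(u))$. *)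

(* Defs.v *)
From Stdlib Require Import Arith List Lia.
Import ListNotations.
Set Implicit Arguments.

(** Names: V := nat (countably infinite).
    Finitely supported permutations of names. *)
Record perm := Perm {
  pfun :> nat -> nat;
  pinv : nat -> nat;
  pK : forall a, pinv (pfun a) = a;
  pKV : forall a, pfun (pinv a) = a;
  pfin : exists l : list nat, forall a, ~ In a l -> pfun a = a }.

Definition swapf (a b c : nat) : nat :=
  if Nat.eqb c a then b else if Nat.eqb c b then a else c.

Lemma swapf_invol a b c : swapf a b (swapf a b c) = c.
Proof.
  unfold swapf.
  destruct (Nat.eqb_spec c a) as [->|Hca].
  - destruct (Nat.eqb_spec b a) as [->|Hba]; [reflexivity|].
    rewrite Nat.eqb_refl; reflexivity.
  - destruct (Nat.eqb_spec c b) as [->|Hcb].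
    + rewrite Nat.eqb_refl; reflexivity.
    + apply Nat.eqb_neq in Hca, Hcb. rewrite Hca, Hcb. reflexivity.
Qed.

Lemma swapf_fin a b : exists l : list nat, forall c, ~ In c l -> swapf a b c = c.
Proof.
  exists [a; b]; intros c Hc; unfold swapf.
  destruct (Nat.eqb_spec c a); [subst; simpl in Hc; tauto|].
  destruct (Nat.eqb_spec c b); [subst; simpl in Hc; tauto|]. reflexivity.
Qed.

Definition swap (a b : nat) : perm :=
  @Perm (swapf a b) (swapf a b) (swapf_invol a b) (swapf_invol a b) (swapf_fin a b).

Record nominal := Nominal {
  carrier :> Type;
  act : perm -> carrier -> carrier;
  act_id : forall (p : perm) x, (forall a, p a = a) -> act p x = x;
  act_comp : forall (p q r : perm) x, (forall a, r a = p (q a)) ->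
      act r x = act p (act q x);
  fin_supp : forall x, exists l : list nat,
      forall p : perm, (forall a, In a l -> p a = a) -> act p x = x }.

Arguments act {n} p x.

Definition supports {X : nominal} (l : list nat) (x : X) : Prop :=
  forall p : perm, (forall a, In a l -> p a = a) -> act p x = x.

(** Least finite support: a belongs to supp x iff a lies in every finite
    support of x. *)
Definition in_supp {X : nominal} (x : X) (a : nat) : Prop :=
  forall l, supports l x -> In a l.

Definition supp_card {X : nominal} (x : X) (n : nat) : Prop :=
  exists l : list nat, NoDup l /\ length l = n /\ (forall a, In a l <-> in_supp x a).

Definition equivariant {X Y : nominal} (f : X -> Y) : Prop :=
  forall (p : perm) (x : X), f (act p x) = act p (f x).

(** u is f-safe: |supp u| = max { |supp v| : v in f^{-1}(f u) },
    the maximum existing. Only the domain structure and equality in the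
    codomain are used. *)
Definition safe {X : nominal} {Z : Type} (f : X -> Z) (u : X) : Prop :=
  exists n, supp_card u n /\
    forall v m, f v = f u -> supp_card v m -> m <= n.

Definition in_bv {X Y : nominal} (f : X -> Y) (u : X) (a : nat) : Prop :=
  in_supp u a /\ ~ in_supp (f u) a.

Definition names_nominal : nominal.
Proof.
  refine (@Nominal nat (fun p a => p a) _ _ _).
  - intros p x H; apply H.
  - intros p q r x H; apply H.
  - intros x; exists [x]; intros p H; apply H; simpl; auto.
Defined.

Definition prod_nominal (X : nominal) : nominal.
Proof.
  refine (@Nominal (nat * X)%type (fun p ax => (p (fst ax), act p (snd ax))) _ _ _).
  - intros p [a x] H; simpl; rewrite H, act_id; auto.
  - intros p q r [a x] H; simpl; rewrite H, (act_comp _ p q r x H); reflexivity.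
  - intros [a x]. destruct (fin_supp _ x) as [l Hl].
    exists (a :: l); intros p Hp; simpl.
    rewrite Hp by (simpl; auto). rewrite Hl; auto.
    intros b Hb; apply Hp; simpl; auto.
Defined.

Definition alpha {Y : nominal} (p1 p2 : nat * Y) : Prop :=
  exists z, z <> fst p1 /\ z <> fst p2 /\
    ~ in_supp (snd p1) z /\ ~ in_supp (snd p2) z /\
    act (swap (fst p1) z) (snd p1) = act (swap (fst p2) z) (snd p2).

(** [V]Y: the quotient of V x Y by alpha, as the type of equivalence classes. *)
Definition abs (Y : nominal) : Type :=
  { C : nat * Y -> Prop | exists x u, forall q, C q <-> alpha (x, u) q }.

Lemma theta_class {Y : nominal} (xu : nat * Y) :
  exists x u, forall q, alpha xu q <-> alpha (x, u) q.
Proof. destruct xu as [x u]; exists x, u; intros q; tauto. Qed.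

Definition theta {Y : nominal} (xu : nat * Y) : abs Y :=
  exist _ (fun q => alpha xu q) (theta_class xu).

Definition theta_comp {X Y : nominal} (f : X -> Y) : prod_nominal X -> abs Y :=
  fun yw => theta (fst yw, f (snd yw)).

(* Main.v *)
Require Import Defs.
From Stdlib Require Import Arith List Lia Classical ClassicalEpsilon FunctionalExtensionality.
Import ListNotations.

Definition pcomp (p q : perm) : perm.
Proof.
  refine (@Perm (fun a => p (q a)) (fun a => pinv q (pinv p a)) _ _ _).
  - intros a; rewrite !pK; reflexivity.
  - intros a; rewrite !pKV; reflexivity.
  - destruct (pfin p) as [l1 H1], (pfin q) as [l2 H2]; exists (l1 ++ l2).
    intros a Ha; rewrite in_app_iff in Ha. rewrite H2 by tauto. apply H1; tauto.
Defined.

Lemma swapf_bb a b : swapf a b b = a.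
Proof. unfold swapf. destruct (Nat.eqb_spec b a); [subst|]; rewrite ?Nat.eqb_refl; auto. Qed.

Lemma swapf_id a c : swapf a a c = c.
Proof. unfold swapf. destruct (Nat.eqb_spec c a); subst; auto. Qed.

Lemma act_swap_invol {X : nominal} a b (t : X) :
  act (swap a b) (act (swap a b) t) = t.
Proof.
  rewrite <- (act_comp X (swap a b) (swap a b) (swap a a) t).
  - apply act_id. intros c; apply swapf_id.
  - intros c; simpl; rewrite swapf_id, swapf_invol; reflexivity.
Qed.

Lemma supports_swap {X : nominal} (t : X) l a b :
  supports l t -> supports (map (swapf a b) l) (act (swap a b) t).
Proof.
  intros Hl q Hq.
  assert (E : act (swap a b) (act q (act (swap a b) t)) = t).
  { rewrite <- (act_comp X q (swap a b) (pcomp q (swap a b))) by (intros; reflexivity).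
    rewrite <- (act_comp X (swap a b) (pcomp q (swap a b))
                  (pcomp (swap a b) (pcomp q (swap a b)))) by (intros; reflexivity).
    apply Hl. intros c Hc. simpl. rewrite Hq. apply swapf_invol.
    apply in_map; auto. }
  rewrite <- (act_swap_invol a b (act q (act (swap a b) t))). rewrite E. reflexivity.
Qed.

Lemma in_supp_swap1 {X : nominal} (t : X) a b c :
  in_supp (act (swap a b) t) c -> in_supp t (swapf a b c).
Proof.
  intros H l Hl. specialize (H _ (@supports_swap _ t l a b Hl)).
  apply in_map_iff in H. destruct H as [d [<- Hd]]. rewrite swapf_invol; auto.
Qed.

Lemma in_supp_swap {X : nominal} (t : X) a b c :
  in_supp (act (swap a b) t) c <-> in_supp t (swapf a b c).
Proof.
  split; [apply in_supp_swap1|].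
  intros H. rewrite <- (act_swap_invol a b t) in H.
  apply in_supp_swap1 in H. rewrite swapf_invol in H; auto.
Qed.

Lemma filter_ex (P : nat -> Prop) (l : list nat) :
  exists L, NoDup L /\ forall a, In a L <-> (In a l /\ P a).
Proof.
  induction l as [|b l [L [HN HL]]].
  - exists []; split; [constructor|]; simpl; tauto.
  - destruct (classic (P b /\ ~ In b L)) as [[Pb Nb]|Hb].
    + exists (b :: L); split; [constructor; auto|].
      intros a; simpl; rewrite HL; split; [intros [->|?]; tauto|].
      intros [[->|?] ?]; tauto.
    + exists L; split; auto. intros a; rewrite HL; simpl; split; [tauto|].
      intros [[<-|?] ?]; [|tauto]. split; auto.
      apply NNPP; intro Hn; apply Hb; split; auto. intro Hi; apply Hn; apply HL in Hi; tauto.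
Qed.

Lemma supp_ex {X : nominal} (t : X) : exists n, supp_card t n.
Proof.
  destruct (fin_supp X t) as [l Hl].
  destruct (filter_ex (in_supp t) l) as [L [HN HL]].
  exists (length L), L; repeat split; auto.
  - intros H; apply HL in H; tauto.
  - intros H; apply HL; split; auto.
Qed.

Lemma supp_card_unique {X : nominal} (t : X) n m :
  supp_card t n -> supp_card t m -> n = m.
Proof.
  intros [L1 [N1 [<- H1]]] [L2 [N2 [<- H2]]].
  apply Nat.le_antisymm; apply NoDup_incl_length; auto; intros a Ha.
  - apply H2, H1, Ha.
  - apply H1, H2, Ha.
Qed.

Lemma supp_card_swap {X : nominal} (t : X) a b n :
  supp_card t n -> supp_card (act (swap a b) t) n.
Proof.
  intros [L [N [<- H]]]. exists (map (swapf a b) L); split; [|split; [|intros c; split]].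
  - apply NoDup_map_inv with (f := swapf a b). rewrite map_map.
    rewrite map_ext with (g := fun x => x) by apply swapf_invol. rewrite map_id; auto.
  - apply length_map.
  - intros Hc. apply in_map_iff in Hc. destruct Hc as [d [<- Hd]].
    apply in_supp_swap. rewrite swapf_invol. apply H; auto.
  - intros Hc. apply in_supp_swap, H in Hc. apply in_map_iff.
    exists (swapf a b c); split; auto. apply swapf_invol.
Qed.

Lemma fresh (l : list nat) : exists z, ~ In z l.
Proof.
  exists (S (list_sum l)). intros H.
  assert (forall a, In a l -> a <= list_sum l).
  { clear H. induction l; simpl; [tauto|]. intros b [->|Hb]; [lia|]. specialize (IHl b Hb); lia. }
  specialize (H0 _ H); lia.
Qed.

Lemma in_supp_prod {X : nominal} (a : nat) (t : X) b :
  @in_supp (prod_nominal X) (a, t) b <-> (b = a \/ in_supp t b).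
Proof.
  split.
  - intros H. destruct (classic (b = a)); [auto|right].
    intros l Hl. assert (Hs : @supports (prod_nominal X) (a :: l) (a, t)).
    { intros p Hp. simpl. rewrite Hp by (simpl; auto). f_equal. apply Hl.
      intros c Hc; apply Hp; simpl; auto. }
    apply H in Hs. destruct Hs; [congruence|auto].
  - intros [Hb|H] l Hl; [subst a|].
    + apply NNPP; intros Hn. destruct (fresh (b :: l)) as [c Hc].
      assert (E := Hl (swap b c)). simpl in E.
      assert (E' : swapf b c b = b /\ act (swap b c) t = t).
      { apply pair_equal_spec, E. intros d Hd. unfold swapf.
        destruct (Nat.eqb_spec d b); [subst; tauto|].
        destruct (Nat.eqb_spec d c); [subst; simpl in Hc; tauto|auto]. }
      destruct E' as [E1 _]. unfold swapf in E1. rewrite Nat.eqb_refl in E1. apply Hc; left; auto. 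
    + apply H. intros p Hp. specialize (Hl p Hp). simpl in Hl.
      apply pair_equal_spec in Hl; tauto.
Qed.

Lemma supp_card_prod {X : nominal} (a : nat) (t : X) n :
  supp_card t n ->
  @supp_card (prod_nominal X) (a, t) (if excluded_middle_informative (in_supp t a) then n else S n).
Proof.
  intros [L [N [<- H]]]. destruct excluded_middle_informative as [Ha|Ha].
  - exists L; repeat split; auto.
    + intros HL; apply in_supp_prod; right; apply H; auto.
    + intros Hb; apply in_supp_prod in Hb; apply H. destruct Hb as [->|]; auto.
  - exists (a :: L); repeat split; auto.
    + constructor; auto. intros HL; apply Ha, H, HL.
    + intros [<-|HL]; apply in_supp_prod; [left|right; apply H]; auto.
    + intros Hb; apply in_supp_prod in Hb. destruct Hb as [->|Hb]; [left|right; apply H]; auto.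
Qed.

Lemma in_supp_f {X Y : nominal} (f : X -> Y) (t : X) a :
  equivariant f -> in_supp (f t) a -> in_supp t a.
Proof.
  intros Hf H l Hl. apply H. intros p Hp. rewrite <- Hf, Hl; auto.
Qed.

Theorem lemma5p41 (X Y : nominal) (f : X -> Y) (u : X) (x : nat) :
  equivariant f -> safe f u -> ~ in_bv f u x ->
  @safe (prod_nominal X) (abs Y) (theta_comp f) ((x, u) : prod_nominal X).
Proof.
  intros Hf [n0 [Hu Hmax]] Hbv.
  eexists; split; [apply (supp_card_prod x u n0 Hu)|].
  intros [y w] m Heq Hm.
  unfold theta_comp, theta in Heq; simpl in Heq.
  apply (f_equal (@proj1_sig _ _)) in Heq; simpl in Heq.
  assert (Ha : alpha (x, f u) (y, f w)).
  { rewrite <- (equal_f Heq (y, f w)).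
    destruct (fin_supp Y (f w)) as [l Hl]. destruct (fresh (y :: l)) as [z Hz].
    exists z; simpl; repeat split; auto.
    - intros ->; apply Hz; left; auto.
    - intros ->; apply Hz; left; auto.
    - intros Hi; apply Hz; right; apply (Hi l Hl).
    - intros Hi; apply Hz; right; apply (Hi l Hl). }
  destruct Ha as [z [Hzx [Hzy [Hzu [Hzw E]]]]]; simpl in *.
  destruct (supp_ex w) as [mw Hw].
  assert (Hmw : mw <= n0).
  { apply (Hmax (act (swap x z) (act (swap y z) w))).
    - rewrite !Hf, <- E, act_swap_invol; reflexivity.
    - apply supp_card_swap, supp_card_swap, Hw. }
  pose proof (supp_card_prod y w mw Hw) as Hyw.
  rewrite (supp_card_unique _ _ _ Hm Hyw).
  destruct excluded_middle_informative as [Hx|Hx];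
  destruct excluded_middle_informative as [Hy|Hy]; try lia.
  exfalso. apply Hx.
  assert (Hfx : in_supp (f u) x).
  { apply NNPP; intro; apply Hbv; split; auto. }
  apply (in_supp_f f w y Hf).
  rewrite <- (swapf_bb y z). apply in_supp_swap. rewrite <- E.
  apply in_supp_swap. rewrite swapf_bb; auto.
Qed.
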